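(* For $n\ge1$ let \[ \mathbf{M}_n=\begin{bmatrix} \frac{n}{2(2n+1)} & -\frac{3}{2n(2n+1)} & 0 & \frac{3}{2n^{5}}-\frac{9H_{n-1}^{(4)}}{2n}\\ 0 & \frac{n}{2(2n+1)} & -\frac{3}{2n(2n+1)} & \frac{3}{2n^{3}}\\ 0 & 0 & \frac{n}{2(2n+1)} & \frac{3}{2n}\\ 0 & 0 & 0 & 1 \end{bmatrix}. \] Then $\lim_{N\to\infty}\mathbf{M}_1\mathbf{M}_2\cdots\mathbf{M}_N$ exists and equals \[ \begin{bmatrix}0&0&0&\zeta(6)\\0&0&0&\zeta(4)\\0&0&0&\zeta(2)\\0&0&0&1\end{bmatrix}. \]
   Context: $\zeta$ denotes the Riemann zeta function. For integers $n\ge0$ and $p\ge1$, the hyper-harmonic number is $H_n^{(p)}=\sum_{k=1}^{n}k^{-p}$ (so $H_0^{(p)}=0$). *)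

(* Defs.v *)
From HB Require Import structures.
From mathcomp Require Import all_boot all_order all_algebra.
From mathcomp Require Import all_classical all_reals all_analysis.
Set Implicit Arguments. Unset Strict Implicit. Unset Printing Implicit Defensive.
Import Order.TTheory GRing.Theory Num.Theory.
Import numFieldNormedType.Exports.
Local Open Scope ring_scope.

Definition hyperH {R : realType} (n p : nat) : R :=
  \sum_(1 <= k < n.+1) ((k%:R : R) ^- p).

Definition zeta {R : realType} (s : nat) : R :=
  limn (fun N : nat => \sum_(1 <= k < N) ((k%:R : R) ^- s)).

Definition Mentry {R : realType} (n : nat) (i j : nat) : R :=
  let nr : R := n%:R in
  let d : R := nr / (2 * (2 * nr + 1)) in
  let o : R := - (3 / (2 * nr * (2 * nr + 1))) in
  match i, j with
  | 0, 0 | 1, 1 | 2, 2 => d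
  | 0, 1 | 1, 2 => o
  | 0, 3 => 3 / (2 * nr ^+ 5) - 9 * hyperH (n.-1) 4 / (2 * nr)
  | 1, 3 => 3 / (2 * nr ^+ 3)
  | 2, 3 => 3 / (2 * nr)
  | 3, 3 => 1
  | _, _ => 0
  end.

Definition Mmat {R : realType} (n : nat) : 'M[R]_4 :=
  \matrix_(i < 4, j < 4) Mentry n i j.

Definition Zentry {R : realType} (i j : nat) : R :=
  match i, j with
  | 0, 3 => zeta 6
  | 1, 3 => zeta 4
  | 2, 3 => zeta 2
  | 3, 3 => 1
  | _, _ => 0
  end.

Definition Zmat {R : realType} : 'M[R]_4 := \matrix_(i < 4, j < 4) Zentry i j.

(* Main.v *)
Require Import Defs.
From HB Require Import structures.
From mathcomp Require Import all_boot all_order all_algebra.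
From mathcomp Require Import all_classical all_reals all_analysis.
From mathcomp Require Import ring lra zify.
Import Order.TTheory GRing.Theory Num.Theory.
Import numFieldNormedType.Exports.
Local Open Scope classical_set_scope.
Local Open Scope ring_scope.
Set Implicit Arguments. Unset Strict Implicit. Unset Printing Implicit Defensive.



Record T3 (R : Type) := mkT { t0 : R; t1 : R; t2 : R }.

Definition T3_to (R : Type) (a : T3 R) := (t0 a, t1 a, t2 a).
Definition T3_of (R : Type) (p : R * R * R) := mkT p.1.1 p.1.2 p.2.
Lemma T3_toK (R : Type) : cancel (@T3_to R) (@T3_of R). Proof. by case. Qed.

HB.instance Definition _ (R : choiceType) := Choice.copy (T3 R) (can_type (@T3_toK R)).

Section T3ring.
Variable R : realType.
Local Notation T := (T3 R).

Definition tadd (a b : T) := mkT (t0 a + t0 b) (t1 a + t1 b) (t2 a + t2 b).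
Definition topp (a : T) := mkT (- t0 a) (- t1 a) (- t2 a).
Definition tzero : T := mkT 0 0 0.

Lemma eqT (a b : T) : t0 a = t0 b -> t1 a = t1 b -> t2 a = t2 b -> a = b.
Proof. by case: a; case: b => /= ? ? ? ? ? ? -> -> ->. Qed.

Program Definition T3_zmodMixin := @GRing.isZmodule.Build T tzero topp tadd _ _ _ _.
Next Obligation. by move=> a b c; apply: eqT => /=; rewrite addrA. Qed.
Next Obligation. by move=> a b; apply: eqT => /=; rewrite addrC. Qed.
Next Obligation. by move=> a; apply: eqT => /=; rewrite add0r. Qed.
Next Obligation. by move=> a; apply: eqT => /=; rewrite addNr. Qed.
HB.instance Definition _ := T3_zmodMixin.

Definition tmul (a b : T) := mkT (t0 a * t0 b) (t0 a * t1 b + t1 a * t0 b)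
   (t0 a * t2 b + t1 a * t1 b + t2 a * t0 b).
Definition tone : T := mkT 1 0 0.

Lemma tmulA : associative tmul.
Proof. by move=> a b c; apply: eqT => /=; ring. Qed.
Lemma tmulC : commutative tmul.
Proof. by move=> a b; apply: eqT => /=; ring. Qed.
Lemma tmul1 : left_id tone tmul.
Proof. by move=> a; apply: eqT => /=; ring. Qed.
Lemma tmulD : left_distributive tmul tadd.
Proof. by move=> a b c; apply: eqT => /=; ring. Qed.
Lemma tone_neq0 : tone != tzero.
Proof. by apply/eqP => -[] /eqP; rewrite oner_eq0. Qed.

HB.instance Definition _ := GRing.Zmodule_isComNzRing.Build T
  tmulA tmulC tmul1 tmulD tone_neq0.

Lemma t0D (a b : T) : t0 (a + b) = t0 a + t0 b. Proof. by []. Qed.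
Lemma t1D (a b : T) : t1 (a + b) = t1 a + t1 b. Proof. by []. Qed.
Lemma t2D (a b : T) : t2 (a + b) = t2 a + t2 b. Proof. by []. Qed.
Lemma t0N (a : T) : t0 (- a) = - t0 a. Proof. by []. Qed.
Lemma t1N (a : T) : t1 (- a) = - t1 a. Proof. by []. Qed.
Lemma t2N (a : T) : t2 (- a) = - t2 a. Proof. by []. Qed.
Lemma t0B (a b : T) : t0 (a - b) = t0 a - t0 b. Proof. by []. Qed.
Lemma t1B (a b : T) : t1 (a - b) = t1 a - t1 b. Proof. by []. Qed.
Lemma t2B (a b : T) : t2 (a - b) = t2 a - t2 b. Proof. by []. Qed.
Lemma t0M (a b : T) : t0 (a * b) = t0 a * t0 b. Proof. by []. Qed.
Lemma t1M (a b : T) : t1 (a * b) = t0 a * t1 b + t1 a * t0 b. Proof. by []. Qed.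
Lemma t2M (a b : T) : t2 (a * b) = t0 a * t2 b + t1 a * t1 b + t2 a * t0 b.
Proof. by []. Qed.
Lemma t0_0 : t0 (0 : T) = 0. Proof. by []. Qed.
Lemma t1_0 : t1 (0 : T) = 0. Proof. by []. Qed.
Lemma t2_0 : t2 (0 : T) = 0. Proof. by []. Qed.
Lemma t0_1 : t0 (1 : T) = 1. Proof. by []. Qed.
Lemma t1_1 : t1 (1 : T) = 0. Proof. by []. Qed.
Lemma t2_1 : t2 (1 : T) = 0. Proof. by []. Qed.

Definition emb (r : R) : T := mkT r 0 0.
Definition yy : T := mkT 0 1 0.
Definition iv (a : R) : T := mkT (a ^- 2) (a ^- 4) (a ^- 6).

Lemma t0_sum I (s : seq I) P (F : I -> T) :
  t0 (\sum_(i <- s | P i) F i) = \sum_(i <- s | P i) t0 (F i).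
Proof. by apply: (big_morph _ t0D t0_0). Qed.
Lemma t1_sum I (s : seq I) P (F : I -> T) :
  t1 (\sum_(i <- s | P i) F i) = \sum_(i <- s | P i) t1 (F i).
Proof. by apply: (big_morph _ t1D t1_0). Qed.
Lemma t2_sum I (s : seq I) P (F : I -> T) :
  t2 (\sum_(i <- s | P i) F i) = \sum_(i <- s | P i) t2 (F i).
Proof. by apply: (big_morph _ t2D t2_0). Qed.

Definition tE := (t0D, t1D, t2D, t0N, t1N, t2N, t0B, t1B, t2B, t0M, t1M, t2M,
  t0_0, t1_0, t2_0, t0_1, t1_1, t2_1).

Lemma test (a : T) : a * yy * yy * yy = 0.
Proof. apply: eqT; rewrite !tE /=; ring. Qed.

End T3ring.
Arguments yy {R}.


Section Mat.
Variable R : realType.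
Local Notation T := (T3 R).

Definition matE (a v : T) (i j : nat) : R :=
  match i, j with
  | 0, 0 | 1, 1 | 2, 2 => t0 a
  | 0, 1 | 1, 2 => t1 a
  | 0, 2 => t2 a
  | 0, 3 => t2 v
  | 1, 3 => t1 v
  | 2, 3 => t0 v
  | 3, 3 => 1
  | _, _ => 0
  end.

Definition mat (a v : T) : 'M[R]_4 := \matrix_(i < 4, j < 4) matE a v i j.

Lemma matM (a v b w : T) : (mat a v * mat b w = mat (a * b) (v + a * w))%R.
Proof.
apply/matrixP => i j; rewrite !mxE.
rewrite !big_ord_recr big_ord0 /= !mxE.
case: i => [[|[|[|[|i]]]] Hi] //; case: j => [[|[|[|[|j]]]] Hj] //=;
  rewrite ?tE /=; ring.
Qed.

Lemma mat1 : mat 1 0 = 1%R.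
Proof.
apply/matrixP => i j; rewrite !mxE.
by case: i => [[|[|[|[|i]]]] Hi] //; case: j => [[|[|[|[|j]]]] Hj].
Qed.

End Mat.


Section Prod.
Variable R : realType.
Local Notation T := (T3 R).

Definition dd (n : nat) : R := n%:R / (2 * (2 * n%:R + 1)).
Definition oo (n : nat) : R := - (3 / (2 * n%:R * (2 * n%:R + 1))).
Definition Mblk (n : nat) : T := mkT (dd n) (oo n) 0.
Definition gam (n : nat) : T := mkT (3 / (2 * n%:R)) (3 / (2 * n%:R ^+ 3))
  (3 / (2 * n%:R ^+ 5) - 9 * hyperH (n.-1) 4 / (2 * n%:R)).

Lemma MmatE n : Mmat n = mat (Mblk n) (gam n).
Proof.
apply/matrixP => i j; rewrite !mxE.
by case: i => [[|[|[|[|i]]]] Hi] //; case: j => [[|[|[|[|j]]]] Hj].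
Qed.

Definition zv : T := mkT (zeta 2) (zeta 4) (zeta 6).
Lemma ZmatE : Zmat = mat 0 zv.
Proof.
apply/matrixP => i j; rewrite !mxE.
by case: i => [[|[|[|[|i]]]] Hi] //; case: j => [[|[|[|[|j]]]] Hj].
Qed.

Fixpoint aa (N : nat) : T := if N is N'.+1 then aa N' * Mblk N else 1.
Fixpoint VV (N : nat) : T := if N is N'.+1 then VV N' + aa N' * gam N else 0.

Lemma prodE N : \prod_(1 <= n < N.+1) (Mmat n : 'M[R]_4) = mat (aa N) (VV N).
Proof.
elim: N => [|N IH]; first by rewrite big_geq // mat1.
by rewrite big_nat_recr //= IH MmatE matM.
Qed.

Lemma mat_cvg (a v : nat -> T) (b w : T) :
  (fun N => t0 (a N)) @ \oo --> t0 b -> (fun N => t1 (a N)) @ \oo --> t1 b ->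
  (fun N => t2 (a N)) @ \oo --> t2 b ->
  (fun N => t0 (v N)) @ \oo --> t0 w -> (fun N => t1 (v N)) @ \oo --> t1 w ->
  (fun N => t2 (v N)) @ \oo --> t2 w ->
  (fun N => mat (a N) (v N)) @ \oo --> mat b w.
Proof.
move=> a0 a1 a2 v0 v1 v2 A /= HA.
case: HA => P MP sPA.
have H : forall ij : 'I_4 * 'I_4, \forall N \near \oo, P ij.1 ij.2 (mat (a N) (v N) ij.1 ij.2).
  case=> i j; have := MP i j; rewrite /=.
  case: i => [[|[|[|[|i]]]] Hi] //; case: j => [[|[|[|[|j]]]] Hj] //=; rewrite !mxE /= => Pn;
  near=> N; rewrite mxE /=; (try exact: nbhs_singleton Pn); near: N.
  all: try by [ apply: a0 | apply: a1 | apply: a2 | apply: v0 | apply: v1 | apply: v2 ].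
have HH : \forall N \near \oo, forall ij : 'I_4 * 'I_4, P ij.1 ij.2 (mat (a N) (v N) ij.1 ij.2).
  by apply: filter_forall.
move: HH; apply: filterS => N HN; apply: sPA => i j; exact: (HN (i, j)).
Unshelve. all: by end_near.
Qed.
End Prod.
Arguments aa {R}. Arguments VV {R}. Arguments Mblk {R}. Arguments gam {R}. Arguments dd {R}. Arguments oo {R}. Arguments zv {R}.


Section Ident.
Variable R : realType.
Local Notation T := (T3 R).

Definition Xf (n : nat) : T :=
  emb (n.+1%:R / (2 * (2 * n%:R + 1))) * (emb (n.+1%:R ^+ 2) - emb 4 * yy).
Fixpoint cc (N : nat) : T := if N is N'.+1 then cc N' * Xf N' else 1.
Fixpoint qq (N k : nat) : T :=
  if N is N'.+1 then qq N' k * iv (k + N)%:R else iv k%:R.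
Fixpoint pp (N : nat) : T := if N is N'.+1 then pp N' * iv N%:R else 1.

Lemma hyperHS N : hyperH N.+1 4 = hyperH N 4 + (N.+1%:R : R) ^- 4.
Proof. by rewrite /hyperH big_nat_recr. Qed.

Lemma natr_pos (n : nat) : (0 : R) < n.+1%:R.
Proof. by rewrite ltr0Sn. Qed.

Lemma claimA N : cc N * pp N =
  emb (2 * N%:R + 1) * aa N * (1 - emb (3 * hyperH N 4) * yy * yy).
Proof.
elim: N => [|n IH].
  by apply: eqT; rewrite /= ?tE /= /hyperH big_geq //=; ring.
have key : emb (2 * n%:R + 1) * (1 - emb (3 * hyperH n 4) * yy * yy) * Xf n * iv n.+1%:R
  = emb (2 * n.+1%:R + 1) * Mblk n.+1 * (1 - emb (3 * hyperH n.+1 4) * yy * yy).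
  rewrite hyperHS.
  have h1 : (n.+1%:R : R) != 0 by rewrite pnatr_eq0.
  have h2 : (2 * n%:R + 1 : R) != 0 by rewrite gt_eqF // ltr_pwDr // mulr_ge0.
  have h3 : (2 * n.+1%:R + 1 : R) != 0 by rewrite gt_eqF // ltr_pwDr // mulr_ge0.
  apply: eqT; rewrite ?tE /emb /yy /iv /Xf /Mblk /dd /oo /= ?tE /=;
  rewrite -[n.+1]addn1 !natrD; by field; rewrite natr1 h1 h3 h2.
have -> : cc n.+1 * pp n.+1 = cc n * Xf n * (pp n * iv n.+1%:R) by [].
have -> : aa n.+1 = aa n * Mblk n.+1 by [].
rewrite [LHS](_ : _ = (cc n * pp n) * Xf n * iv n.+1%:R); last by ring.
rewrite IH [LHS](_ : _ = aa n * (emb (2 * n%:R + 1) *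
   (1 - emb (3 * hyperH n 4) * yy * yy) * Xf n * iv n.+1%:R)); last by ring.
by rewrite key; ring.
Qed.

Lemma tn n : aa n * gam n.+1 = cc n * emb (3 * n.+1%:R / (2 * (2 * n%:R + 1))) * pp n.+1.
Proof.
have key : emb (2 * n%:R + 1) * (1 - emb (3 * hyperH n 4) * yy * yy) *
   emb (3 * n.+1%:R / (2 * (2 * n%:R + 1))) * iv n.+1%:R = (gam n.+1 : T).
  have h1 : (n.+1%:R : R) != 0 by rewrite pnatr_eq0.
  have h2 : (2 * n%:R + 1 : R) != 0 by rewrite gt_eqF // ltr_pwDr // mulr_ge0.
  apply: eqT; rewrite ?tE /emb /yy /iv /gam /= ?tE /=;
  rewrite -[n.+1]addn1 !natrD; by field; rewrite natr1 h1 h2.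
have -> : pp n.+1 = pp n * iv n.+1%:R by [].
rewrite [RHS](_ : _ = (cc n * pp n) * emb (3 * n.+1%:R / (2 * (2 * n%:R + 1))) * iv n.+1%:R);
  last by ring.
rewrite claimA -key; ring.
Qed.

Lemma qq_left N k : qq N.+1 k = iv k%:R * qq N k.+1.
Proof.
elim: N => [|N IH]; first by rewrite /= addn1.
have -> : qq N.+2 k = qq N.+1 k * iv (k + N.+2)%:R by [].
have -> : qq N.+1 k.+1 = qq N k.+1 * iv (k.+1 + N.+1)%:R by [].
rewrite IH addSnnS; ring.
Qed.

Lemma qq_pp N : qq N 1 = pp N.+1.
Proof.
elim: N => [|N IH]; first by rewrite /= mul1r.
have -> : qq N.+1 1 = qq N 1 * iv (1 + N.+1)%:R by [].
by rewrite IH add1n.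
Qed.

Lemma ivK (a : R) : a != 0 -> iv a * (emb (a ^+ 2) - yy) = 1.
Proof.
move=> ha; apply: eqT; rewrite ?tE /emb /yy /iv /= ?tE /=; field; exact: ha.
Qed.

Definition Gk (n k : nat) : T :=
  cc n * emb ((k%:R + (3 * n%:R + 1) / 2) / (2 * n%:R + 1)) * qq n k.

Lemma tele n k : (0 < k)%N ->
  cc n * qq n k - cc n.+1 * qq n.+1 k = Gk n k - Gk n k.+1.
Proof.
move=> k0.
set Q := qq n.+1 k.
pose A : T := emb ((k + n.+1)%:R ^+ 2) - yy.
pose B : T := emb (k%:R ^+ 2) - yy.
have E1 : qq n k = Q * A.
  rewrite /Q /A (_ : qq n.+1 k = qq n k * iv (k + n.+1)%:R) // -mulrA ivK ?mulr1 //.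
have E2 : qq n k.+1 = Q * B.
  rewrite /Q /B qq_left (mulrC (iv _)) -mulrA ivK ?mulr1 //.
  by rewrite pnatr_eq0 -lt0n.
have key : A - Xf n = emb ((k%:R + (3 * n%:R + 1) / 2) / (2 * n%:R + 1)) * A
   - emb ((k.+1%:R + (3 * n%:R + 1) / 2) / (2 * n%:R + 1)) * B.
  have h2 : (2 * n%:R + 1 : R) != 0 by rewrite gt_eqF // ltr_pwDr // mulr_ge0.
  apply: eqT; rewrite /A /B ?tE /emb /yy /Xf /= ?tE /=;
  rewrite -?[n.+1]addn1 -?[k.+1]addn1 ?addnA !natrD; by field.
rewrite /Gk E1 E2 /= [cc n * Xf n * Q](_ : _ = cc n * Q * Xf n); last by ring.
rewrite [LHS](_ : _ = cc n * Q * (A - Xf n)); last by ring.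
rewrite key; ring.
Qed.

Definition SS (N K : nat) : T := \sum_(1 <= k < K.+1) cc N * qq N k.

Lemma Gk1 n : Gk n 1 = aa n * gam n.+1.
Proof.
rewrite tn /Gk qq_pp; congr (_ * emb _ * _).
have h2 : (2 * n%:R + 1 : R) != 0 by rewrite gt_eqF // ltr_pwDr // mulr_ge0.
rewrite -[n.+1]addn1 natrD; by field.
Qed.

Lemma SS_step n K : SS n K - SS n.+1 K = aa n * gam n.+1 - Gk n K.+1.
Proof.
rewrite /SS -sumrB.
rewrite (eq_big_nat _ _ (F2 := fun k => - (Gk n k.+1 - Gk n k))); last first.
  by move=> k /andP[k1 _]; rewrite tele // opprB.
by rewrite sumrN telescope_sumr // opprB Gk1.
Qed.

Definition EE (N K : nat) : T := \sum_(0 <= n < N) Gk n K.+1.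

Lemma main_id N K : VV N = SS 0 K - SS N K + EE N K.
Proof.
elim: N => [|N IH]; first by rewrite /EE big_geq // subrr addr0.
have -> : VV N.+1 = VV N + aa N * gam N.+1 by [].
rewrite IH /EE big_nat_recr //= -/(EE N K).
have := SS_step N K; move=> h.
rewrite [aa N * gam N.+1](_ : _ = SS N K - SS N.+1 K + Gk N K.+1); last first.
  by rewrite h subrK.
ring.
Qed.

End Ident.
Arguments Xf {R}. Arguments cc {R}. Arguments qq {R}. Arguments pp {R}. Arguments Gk {R}. Arguments SS {R}. Arguments EE {R}.


Section Bounds.
Variable R : realType.
Local Notation T := (T3 R).

Definition nrm (a : T) : R := `|t0 a| + `|t1 a| + `|t2 a|.

Lemma nrm_ge0 a : 0 <= nrm a.
Proof. by rewrite /nrm !addr_ge0. Qed.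

Lemma nrm0 : nrm 0 = 0.
Proof. by rewrite /nrm /= normr0 !addr0. Qed.

Lemma nrmD a b : nrm (a + b) <= nrm a + nrm b.
Proof.
rewrite /nrm !tE.
have h0 := ler_normD (t0 a) (t0 b); have h1 := ler_normD (t1 a) (t1 b).
have h2 := ler_normD (t2 a) (t2 b); lra.
Qed.

Lemma nrmM a b : nrm (a * b) <= nrm a * nrm b.
Proof.
rewrite /nrm !tE.
have h1 := ler_normD (t0 a * t1 b) (t1 a * t0 b).
have h2 := ler_normD (t0 a * t2 b + t1 a * t1 b) (t2 a * t0 b).
have h3 := ler_normD (t0 a * t2 b) (t1 a * t1 b).
rewrite !normrM in h1 h2 h3 *.
have a0 := normr_ge0 (t0 a); have a1 := normr_ge0 (t1 a); have a2 := normr_ge0 (t2 a).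
have b0 := normr_ge0 (t0 b); have b1 := normr_ge0 (t1 b); have b2 := normr_ge0 (t2 b).
nra.
Qed.

Lemma nrm_sum m n (F : nat -> T) :
  nrm (\sum_(m <= i < n) F i) <= \sum_(m <= i < n) nrm (F i).
Proof.
apply: (big_ind2 (fun x y => nrm x <= y)); first by rewrite nrm0.
  by move=> x1 y1 x2 y2 h1 h2; apply: le_trans (nrmD _ _) _; apply: lerD.
by [].
Qed.

Lemma t0_le a : `|t0 a| <= nrm a.
Proof. rewrite /nrm; have := normr_ge0 (t1 a); have := normr_ge0 (t2 a); lra. Qed.
Lemma t1_le a : `|t1 a| <= nrm a.
Proof. rewrite /nrm; have := normr_ge0 (t0 a); have := normr_ge0 (t2 a); lra. Qed.
Lemma t2_le a : `|t2 a| <= nrm a.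
Proof. rewrite /nrm; have := normr_ge0 (t1 a); have := normr_ge0 (t0 a); lra. Qed.

Lemma nrm_iv (a : R) : 1 <= a -> nrm (iv a) <= 3 * a ^- 2.
Proof.
move=> a1; have a0 : 0 < a by lra.
have p2 : 0 <= a ^- 2 by rewrite invr_ge0 exprn_ge0 // ltW.
have p4 : 0 <= a ^- 4 by rewrite invr_ge0 exprn_ge0 // ltW.
have p6 : 0 <= a ^- 6 by rewrite invr_ge0 exprn_ge0 // ltW.
rewrite /nrm /iv /= (ger0_norm p2) (ger0_norm p4) (ger0_norm p6).
have e2 : 1 <= a ^+ 2 by rewrite exprn_ege1.
have h4 : a ^- 4 <= a ^- 2.
  rewrite lef_pV2 ?posrE ?exprn_gt0 //; apply: ler_weXn2l => //.
have h6 : a ^- 6 <= a ^- 2.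
  rewrite lef_pV2 ?posrE ?exprn_gt0 //; apply: ler_weXn2l => //.
lra.
Qed.

Lemma nrmM_le a b x y : nrm a <= x -> nrm b <= y -> nrm (a * b) <= x * y.
Proof.
move=> ha hb; apply: le_trans (nrmM _ _) _.
by apply: ler_pM => //; apply: nrm_ge0.
Qed.

Lemma nrm_Mblk m : (0 < m)%N -> nrm (Mblk m) <= 2 / 3.
Proof.
move=> m0; have x1 : (1 : R) <= m%:R by rewrite ler1n.
rewrite /nrm /Mblk /dd /oo /= normr0 addr0 normrN.
rewrite !ger0_norm ?divr_ge0 ?mulr_ge0 ?addr_ge0 //.
set x := m%:R in x1 *.
have -> : x / (2 * (2 * x + 1)) + 3 / (2 * x * (2 * x + 1)) =
  (x ^+ 2 + 3) / (2 * x * (2 * x + 1)).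
  by field; apply/andP; split; apply/negP => /eqP; lra.
rewrite ler_pdivrMr; last by apply: mulr_gt0; [apply: mulr_gt0|]; lra.
nra.
Qed.

Lemma aa_bound N : nrm (aa N) <= (2 / 3) ^+ N.
Proof.
elim: N => [|N IH]; first by rewrite /nrm /= normr1 normr0 !addr0 expr0.
rewrite exprSr; apply: nrmM_le => //; exact: nrm_Mblk.
Qed.


Definition XX (N : nat) : R := N.+1%:R * (N.+1%:R ^+ 2 + 4) / (2 * (2 * N%:R + 1)).
Definition rN (N : nat) : R := XX N * (3 / N.+2%:R ^+ 2).
Fixpoint eb (N : nat) : R := if N is N'.+1 then eb N' * rN N' else 1.

Lemma XX_ge0 N : 0 <= XX N.
Proof. by rewrite /XX divr_ge0 ?mulr_ge0 ?addr_ge0 ?exprn_ge0. Qed.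

Lemma nrm_Xf N : nrm (Xf N) <= XX N.
Proof.
set r : R := N.+1%:R / (2 * (2 * N%:R + 1)).
set s : R := N.+1%:R ^+ 2.
have r0 : 0 <= r by rewrite /r divr_ge0 ?mulr_ge0 ?addr_ge0.
have s0 : 0 <= s by rewrite /s exprn_ge0.
have e0 : t0 (Xf N) = r * s by rewrite /Xf !tE /emb /yy /r /s /=; ring.
have e1 : t1 (Xf N) = - (4 * r) by rewrite /Xf !tE /emb /yy /r /s /=; ring.
have e2 : t2 (Xf N : T) = 0 by rewrite /Xf !tE /emb /yy /=; ring.
rewrite /nrm e0 e1 e2 normrN normr0 addr0 !ger0_norm ?mulr_ge0 //.
rewrite /XX le_eqVlt; apply/orP; left; apply/eqP; rewrite /r /s; ring.
Qed.

Lemma nrm1 : nrm (1 : T) = 1.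
Proof. by rewrite /nrm /= normr1 normr0 !addr0. Qed.

Lemma qq_step N k : (0 < k)%N ->
  nrm (qq N.+1 k) <= nrm (qq N k) * (3 / N.+2%:R ^+ 2).
Proof.
move=> k0; have -> : qq N.+1 k = qq N k * iv (k + N.+1)%:R by [].
apply: nrmM_le => //.
have a1 : (N.+2%:R : R) <= (k + N.+1)%:R by rewrite ler_nat; lia.
have b1 : (1 : R) <= N.+2%:R by rewrite ler1n.
apply: le_trans (nrm_iv _) _; first by lra.
rewrite ler_pM2l // lef_pV2 ?posrE ?exprn_gt0 //; try lra.
by rewrite !expr2; nra.
Qed.

Lemma ccqq_bound N k : (0 < k)%N ->
  nrm (cc N) * nrm (qq N k) <= eb N * nrm (iv k%:R).
Proof.
move=> k0; elim: N => [|N IH]; first by rewrite /= nrm1 !mul1r.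
have h1 : nrm (cc N.+1) <= nrm (cc N) * XX N.
  by apply: nrmM_le => //; apply: nrm_Xf.
have h2 := qq_step N k0.
have p3 : 0 <= 3 / N.+2%:R ^+ 2 :> R by rewrite divr_ge0 ?exprn_ge0.
apply: le_trans (ler_pM (nrm_ge0 _) (nrm_ge0 _) h1 h2) _.
rewrite [eb N.+1]/= /rN.
rewrite [X in X <= _](_ : _ = (nrm (cc N) * nrm (qq N k)) * (XX N * (3 / N.+2%:R ^+ 2)));
  last by ring.
rewrite [X in _ <= X](_ : _ = (eb N * nrm (iv k%:R)) * (XX N * (3 / N.+2%:R ^+ 2)));
  last by ring.
by apply: ler_wpM2r => //; rewrite mulr_ge0 // XX_ge0.
Qed.


Lemma inv2_aux (x : R) : 1 <= x -> x ^- 2 <= 2 / x - 2 / (x + 1).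
Proof.
move=> x1.
have -> : 2 / x - 2 / (x + 1) = 2 / (x * (x + 1)).
  by field; apply/andP; split; apply/negP => /eqP; lra.
rewrite -subr_ge0.
have -> : 2 / (x * (x + 1)) - x ^- 2 = (x - 1) / (x ^+ 2 * (x + 1)).
  by field; apply/andP; split; apply/negP => /eqP; lra.
apply: divr_ge0; first lra.
by apply: mulr_ge0; [apply: exprn_ge0|]; lra.
Qed.

Lemma sum_inv2 K : \sum_(1 <= k < K.+1) (k%:R : R) ^- 2 <= 2 - 2 / K.+1%:R.
Proof.
elim: K => [|K IH]; first by rewrite big_geq // divr1 subrr.
rewrite big_nat_recr //=.
have h := inv2_aux (x := K.+1%:R) (ler1n _ _).
have -> : (K.+2%:R : R) = K.+1%:R + 1 by rewrite -natr1.
apply: le_trans (lerD IH (lexx _)) _.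
apply: le_trans (lerD (lexx _) h) _; by rewrite addrA subrK.
Qed.

Lemma eb_ge0 N : 0 <= eb N.
Proof.
elim: N => [|N IH] //=; apply: mulr_ge0 => //.
by rewrite /rN mulr_ge0 ?XX_ge0 // divr_ge0 ?exprn_ge0.
Qed.

Lemma SS_bound N K : nrm (SS N K) <= 6 * eb N.
Proof.
apply: le_trans (nrm_sum _ _ _) _.
apply: (@le_trans _ _ (\sum_(1 <= k < K.+1) eb N * (3 * (k%:R : R) ^- 2))).
  apply: ler_sum_nat => k /andP[k1 _].
  apply: le_trans (nrmM _ _) _; apply: le_trans (ccqq_bound N k1) _.
  by apply: ler_wpM2l; [apply: eb_ge0 | apply: nrm_iv; rewrite ler1n].
rewrite -mulr_sumr -mulr_sumr [6 * _]mulrC ler_wpM2l ?eb_ge0 //.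
have := sum_inv2 K; have : 0 <= 2 / K.+1%:R :> R by rewrite divr_ge0.
move: (2 / K.+1%:R : R) => a h1 h2; lra.
Qed.

Lemma rN_aux (x : R) : 1 <= x ->
  (x + 1) * ((x + 1) ^+ 2 + 4) / (2 * (2 * x + 1)) * (3 / (x + 2) ^+ 2) <= 8 / 9.
Proof.
move=> x1.
have -> : (x + 1) * ((x + 1) ^+ 2 + 4) / (2 * (2 * x + 1)) * (3 / (x + 2) ^+ 2)
   = 3 * ((x + 1) * ((x + 1) ^+ 2 + 4)) / (2 * (2 * x + 1) * (x + 2) ^+ 2).
  by field; apply/andP; split; apply/negP => /eqP; lra.
rewrite ler_pdivrMr; last first.
  by apply: mulr_gt0; [apply: mulr_gt0; lra | apply: exprn_gt0; lra].
have h : 0 <= (x - 1) * (5 * x ^+ 2 + 68 * x + 71).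
  by apply: mulr_ge0; [lra | rewrite expr2; nra].
rewrite !expr2 in h *; nra.
Qed.

Lemma rN_le N : (0 < N)%N -> rN N <= 8 / 9.
Proof.
move=> N0; have x1 : (1 : R) <= N%:R by rewrite ler1n.
have e1 : (N.+1%:R : R) = N%:R + 1 by rewrite -natr1.
have e2 : (N.+2%:R : R) = N%:R + 2 by rewrite -!natr1; ring.
rewrite /rN /XX e1 e2; exact: rN_aux.
Qed.

Lemma eb_bound N : eb N <= 3 * (8 / 9) ^+ N.
Proof.
case: N => [|N]; first by rewrite /= expr0; lra.
elim: N => [|N IH].
  rewrite /= /rN /XX mul1r expr1.
  have -> : (1%:R : R) * (1%:R ^+ 2 + 4) / (2 * (2 * 0%:R + 1)) * (3 / 2%:R ^+ 2) = 15 / 8.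
    by rewrite /= ?expr2; field.
  lra.
have -> : eb N.+2 = eb N.+1 * rN N.+1 by [].
rewrite exprSr mulrA.
apply: ler_pM; [exact: eb_ge0 | | exact: IH | exact: rN_le].
by rewrite /rN mulr_ge0 ?XX_ge0 // divr_ge0 ?exprn_ge0.
Qed.

End Bounds.
Arguments eb {R}. Arguments rN {R}. Arguments XX {R}.


Section Lim.
Variable R : realType.
Local Notation T := (T3 R).

Lemma lim_bound (u : nat -> R) (l : R) (b : nat -> R) :
  b @ \oo --> 0 -> (forall n, `|l - u n| <= b n) -> u @ \oo --> l.
Proof.
move=> hb hu; apply/cvgrPdist_le => e e0.
near=> n; apply: le_trans (hu n) _; apply: le_trans (ler_norm (b n)) _.
near: n; exact: cvgr0_norm_le.
Unshelve. all: by end_near.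
Qed.

Lemma qq_bound0 N k : (0 < k)%N -> nrm (qq N k : T) <= 3 ^+ N * (3 * k%:R ^- 2).
Proof.
move=> k0; elim: N => [|N IH].
  by rewrite expr0 mul1r; apply: nrm_iv; rewrite ler1n.
apply: le_trans (qq_step R N k0) _.
have h3 : 3 / N.+2%:R ^+ 2 <= 3 :> R.
  rewrite ler_pdivrMr ?exprn_gt0 // ler_peMr //.
  by rewrite exprn_ege1 // ler1n.
rewrite [X in _ <= X](_ : _ = (3 ^+ N * (3 / k%:R ^+ 2)) * 3); last by rewrite exprSr; ring.
apply: ler_pM => //; first exact: nrm_ge0. all: try by rewrite divr_ge0 ?exprn_ge0.
Qed.

Lemma ineq_aux (k b d : R) : 1 <= k -> 0 <= b -> 1 <= d -> k + b <= k * (1 + b) * d.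
Proof.
move=> k1 b0 d1.
have h1 : 0 <= (k - 1) * b by apply: mulr_ge0; lra.
have h2 : 0 <= (k * (1 + b)) * (d - 1) by apply: mulr_ge0; [apply: mulr_ge0|]; lra.
nra.
Qed.

Definition Cn (n : nat) : R := nrm (cc n : T) * (1 + (3 * n%:R + 1) / 2) * 3 ^+ n.+1.

Lemma Gk_bound n K : nrm (Gk n K.+1 : T) <= Cn n / K.+1%:R.
Proof.
rewrite /Gk.
set k : R := K.+1%:R.
have k1 : 1 <= k by rewrite /k ler1n.
set b : R := (3 * n%:R + 1) / 2.
have b0 : 0 <= b by rewrite /b divr_ge0 // addr_ge0 // mulr_ge0.
have d1 : 1 <= 2 * n%:R + 1 :> R by rewrite lerDr mulr_ge0.
have hc : `|(k + b) / (2 * n%:R + 1)| <= k * (1 + b).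
  rewrite ger0_norm; last by rewrite divr_ge0 //; lra.
  rewrite ler_pdivrMr; last by lra.
  exact: ineq_aux.
apply: le_trans (nrmM _ _) _.
apply: (@le_trans _ _ (nrm (cc n : T) * (k * (1 + b)) * (3 ^+ n * (3 * k ^- 2)))).
  apply: ler_pM; [exact: nrm_ge0 | exact: nrm_ge0 | | exact: qq_bound0].
  apply: le_trans (nrmM _ _) _; apply: ler_wpM2l; first exact: nrm_ge0.
  by rewrite /nrm /emb /= normr0 !addr0.
rewrite /Cn -/b [3 ^+ n.+1]exprS le_eqVlt; apply/orP; left; apply/eqP.
have kn : k != 0 by apply/negP => /eqP; lra.
move: kn; rewrite /k /b => kn.
move: (nrm (cc n : T)) (3 ^+ n : R) => a c.
by field.
Qed.

Lemma EE_bound N K : nrm (EE N K : T) <= (\sum_(0 <= n < N) Cn n) / K.+1%:R.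
Proof.
apply: le_trans (nrm_sum _ _ _) _; rewrite mulr_suml.
by apply: ler_sum_nat => n _; apply: Gk_bound.
Qed.

End Lim.
Arguments Cn {R}.


Section Final.
Variable R : realType.
Local Notation T := (T3 R).

Lemma fixedN (tc : T -> R) (z : R) N :
  (forall a b c : T, tc (a - b + c) = tc a - tc b + tc c) ->
  (forall a, `|tc a| <= nrm a) ->
  (fun K => tc (SS 0 K)) @ \oo --> z ->
  `|z - tc (VV N)| <= 6 * eb N.
Proof.
move=> htc hn hz.
pose D : R := \sum_(0 <= n < N) Cn n.
have hE : (fun K => tc (EE N K : T)) @ \oo --> 0.
  apply: (@lim_bound R _ _ (fun K => D * harmonic K)).
    have := @cvgMl_tmp _ _ _ _ _ D _ cvg_harmonic; rewrite mulr0; exact.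
  move=> K; rewrite sub0r normrN; apply: le_trans (hn _) _.
  exact: EE_bound.
have ef : (fun K => tc (SS N K)) = (fun K => tc (SS 0 K) + tc (EE N K) - tc (VV N)).
  apply: funext => K; rewrite (main_id R N K) htc; ring.
have hf : (fun K => tc (SS N K)) @ \oo --> z + 0 - tc (VV N).
  rewrite ef; apply: cvgB; [exact: cvgD | exact: cvg_cst].
rewrite addr0 in hf.
apply: (cvgr_to_le (cvg_norm hf)).
apply: nearW => K; apply: le_trans (hn _) _; exact: SS_bound.
Qed.


Lemma inv_pow_le (k s : nat) : (0 < k)%N -> (2 <= s)%N -> (k%:R : R) ^- s <= k%:R ^- 2.
Proof.
move=> k0 s2; have k1 : (1 : R) <= k%:R by rewrite ler1n.
rewrite lef_pV2 ?posrE ?exprn_gt0 //; try lra.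
exact: ler_weXn2l.
Qed.

Lemma zeta_cvg s : (2 <= s)%N ->
  (fun K => \sum_(1 <= k < K.+1) (k%:R : R) ^- s) @ \oo --> zeta s.
Proof.
move=> s2.
pose u := fun K => \sum_(1 <= k < K) (k%:R : R) ^- s.
have cu : cvgn u.
  apply: nondecreasing_is_cvgn.
    apply: (@nondecreasing_series R (fun k => (k%:R : R) ^- s) xpredT 1).
    by move=> n _ _; rewrite invr_ge0 exprn_ge0.
  exists 2 => _ [n _ <-]; rewrite /u.
  case: n => [|n]; first by rewrite big_geq.
  apply: (@le_trans _ _ (\sum_(1 <= k < n.+1) (k%:R : R) ^- 2)).
    by apply: ler_sum_nat => k /andP[k1 _]; apply: inv_pow_le.
  apply: le_trans (sum_inv2 R n) _.
  by rewrite gerDl oppr_le0 divr_ge0.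
have hu : u @ \oo --> limn u := cu.
move: hu; rewrite -cvg_shiftS; exact.
Qed.

Lemma S0_t0 K : t0 (SS 0 K : T) = \sum_(1 <= k < K.+1) (k%:R : R) ^- 2.
Proof. rewrite /SS t0_sum; apply: eq_bigr => k _; rewrite /=; ring. Qed.
Lemma S0_t1 K : t1 (SS 0 K : T) = \sum_(1 <= k < K.+1) (k%:R : R) ^- 4.
Proof. rewrite /SS t1_sum; apply: eq_bigr => k _; rewrite /=; ring. Qed.
Lemma S0_t2 K : t2 (SS 0 K : T) = \sum_(1 <= k < K.+1) (k%:R : R) ^- 6.
Proof. rewrite /SS t2_sum; apply: eq_bigr => k _; rewrite /=; ring. Qed.

Lemma geo_cvg (c q : R) : 0 <= q < 1 -> (fun n => c * q ^+ n) @ \oo --> 0.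
Proof.
move=> /andP[q0 q1].
have := @cvgMl_tmp _ _ _ _ _ c _ (@cvg_expr R q _); rewrite mulr0; apply.
by rewrite ger0_norm.
Qed.

Lemma VV_cvg (tc : T -> R) (z : R) :
  (forall a b c : T, tc (a - b + c) = tc a - tc b + tc c) ->
  (forall a, `|tc a| <= nrm a) ->
  (fun K => tc (SS 0 K)) @ \oo --> z ->
  (fun N => tc (VV N)) @ \oo --> z.
Proof.
move=> htc hn hz.
apply: (@lim_bound R _ _ (fun N => 18 * (8 / 9) ^+ N)).
  by apply: geo_cvg; apply/andP; split; lra.
move=> N; apply: le_trans (fixedN N htc hn hz) _.
have := eb_bound R N; lra.
Qed.

Lemma aa_cvg (tc : T -> R) :
  (forall a, `|tc a| <= nrm a) -> tc 0 = 0 ->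
  (fun N => tc (aa N)) @ \oo --> tc 0.
Proof.
move=> hn h0; rewrite h0.
apply: (@lim_bound R _ _ (fun N => 1 * (2 / 3) ^+ N)).
  by apply: geo_cvg; apply/andP; split; lra.
move=> N; rewrite sub0r normrN mul1r; apply: le_trans (hn _) _.
exact: aa_bound.
Qed.

End Final.

Theorem mainTheorem4 (R : realType) :
  (fun N : nat => \prod_(1 <= n < N.+1) (Mmat n : 'M[R]_4)) @ \oo --> (Zmat : 'M[R]_4).
Proof.
have -> : (fun N : nat => \prod_(1 <= n < N.+1) (Mmat n : 'M[R]_4)) =
  (fun N => mat (aa N) (VV N)) by apply: funext => N; exact: prodE.
rewrite ZmatE; apply: mat_cvg.
- by apply: aa_cvg => //; apply: t0_le.
- by apply: aa_cvg => //; apply: t1_le.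
- by apply: aa_cvg => //; apply: t2_le.
- apply: VV_cvg; [by move=> *; rewrite !tE | exact: t0_le |].
  by rewrite (funext (@S0_t0 R)); apply: zeta_cvg.
- apply: VV_cvg; [by move=> *; rewrite !tE | exact: t1_le |].
  by rewrite (funext (@S0_t1 R)); apply: zeta_cvg.
- apply: VV_cvg; [by move=> *; rewrite !tE | exact: t2_le |].
  by rewrite (funext (@S0_t2 R)); apply: zeta_cvg.
Qed.
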